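(* Fix $(\boldsymbol l,\boldsymbol m)\in\mathcal Z_{kn}$. For generic $\bar\alpha=(\alpha_1,\dots,\alpha_n)$ and $\bar z=(z_1,\dots,z_k)$, the common eigenspaces of the operators $$\mathcal H_a=\sum_{i=1}^n\alpha_i\,\xi_{ai}\partial_{ai}+\sum_{b\ne a}\frac{1}{z_a-z_b}\sum_{i,j=1}^n\xi_{ai}\partial_{aj}\,\xi_{bj}\partial_{bi},\qquad a=1,\dots,k,$$ restricted to $\mathfrak P_{kn}[\boldsymbol l,\boldsymbol m]$ are one-dimensional. Similarly, for generic $\bar\alpha,\bar z$, the common eigenspaces of the operators $$\mathcal H'_i=\sum_{a=1}^k z_a\,\xi_{ai}\partial_{ai}+\sum_{j\ne i}\frac{1}{\alpha_j-\alpha_i}\sum_{a,b=1}^k\xi_{ai}\partial_{bi}\,\xi_{bj}\partial_{aj},\qquad i=1,\dots,n,$$ restricted to $\mathfrak P_{kn}[\boldsymbol l,\boldsymbol m]$ are one-dimensional.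
   Context: $\mathfrak P_{kn}$ is the space of polynomials in pairwise anticommuting variables $\xi_{ai}$ ($a\le k$, $i\le n$); the left derivation $\partial_{ai}$ sends a monomial $\xi_{c_1}\cdots\xi_{c_l}$ to $(-1)^{s-1}$ times the monomial with the $s$-th factor removed if $c_s=(a,i)$, and to $0$ otherwise. $\mathcal Z_{kn}$ is the set of $(\boldsymbol l,\boldsymbol m)\in\mathbb Z_{\ge0}^k\times\mathbb Z_{\ge0}^n$ with $l_a\le n$, $m_i\le k$, $\sum l_a=\sum m_i$; $\mathfrak P_{kn}[\boldsymbol l,\boldsymbol m]$ is spanned by the monomials $\prod\xi_{ai}^{d_{ai}}$, $d_{ai}\in\{0,1\}$, with $\sum_ad_{ai}=m_i$, $\sum_id_{ai}=l_a$. The operators $\mathcal H_a$ and $\mathcal H'_i$ are the images of the Gaudin Hamiltonians $H^{\langle n,k\rangle}_a(\bar\alpha,\bar z)=\sum_i\alpha_i(e_{ii})_{(a)}+\sum_{b\ne a}\Omega_{(ab)}/(z_a-z_b)\in U(\mathfrak{gl}_n)^{\otimes k}$ and $H^{\langle k,n\rangle}_i(\bar z,-\bar\alpha)\in U(\mathfrak{gl}_k)^{\otimes n}$ under $(e^{\langle n\rangle}_{ij})_{(a)}\mapsto\xi_{ai}\partial_{aj}$ and $(e^{\langle k\rangle}_{ab})_{(i)}\mapsto\xi_{ai}\partial_{bi}$ respectively; the $\alpha_i$ are pairwise distinct and the $z_a$ pairwise distinct. *)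

(* Defs.v *)
From HB Require Import structures.
From mathcomp Require Import all_boot all_order all_algebra.
From mathcomp Require Export mpoly.
Set Implicit Arguments. Unset Strict Implicit. Unset Printing Implicit Defensive.
Import Order.TTheory GRing.Theory Num.Theory.
Local Open Scope ring_scope.

Section Fermionic.
Variables (C : numClosedFieldType) (k n : nat).

(* The Grassmann variable xi_{ai} is indexed by c = mxvec_index a i : 'I_(k*n);
   monomials xi_{c_1}...xi_{c_l} with c_1 < ... < c_l are indexed by the set
   {c_1,...,c_l}.  An element of P_kn is its coefficient function. *)
Definition vidx (a : 'I_k) (i : 'I_n) : 'I_(k * n) := mxvec_index a i.

Definition Pkn := {ffun {set 'I_(k * n)} -> C}.

Definition mono (S : {set 'I_(k * n)}) : Pkn := [ffun T => (T == S)%:R].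

Definition scalP (c : C) (f : Pkn) : Pkn := [ffun T => c * f T].
Definition addP (f g : Pkn) : Pkn := [ffun T => f T + g T].
Definition zeroP : Pkn := [ffun _ => 0].

(* left derivation d_d on a basis monomial: sign (-1)^(s-1), s = position of d *)
(* then left multiplication by xi_c *)
Definition xd_mono (c d : 'I_(k * n)) (S : {set 'I_(k * n)}) : Pkn :=
  if d \in S then
    let S' := S :\ d in
    if c \in S' then zeroP
    else scalP ((-1) ^+ (#|[set e in S | (e < d)%N]| + #|[set e in S' | (e < c)%N]|))
               (mono (c |: S'))
  else zeroP.

Definition XD (c d : 'I_(k * n)) (f : Pkn) : Pkn :=
  [ffun T => \sum_(S : {set 'I_(k * n)}) f S * xd_mono c d S T].

Definition Hop (al : 'I_n -> C) (z : 'I_k -> C) (a : 'I_k) (f : Pkn) : Pkn :=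
  [ffun T =>
     (\sum_(i < n) al i * XD (vidx a i) (vidx a i) f T)
   + \sum_(b < k | b != a) (z a - z b)^-1 *
       \sum_(i < n) \sum_(j < n)
          XD (vidx a i) (vidx a j) (XD (vidx b j) (vidx b i) f) T].

Definition Hop' (al : 'I_n -> C) (z : 'I_k -> C) (i : 'I_n) (f : Pkn) : Pkn :=
  [ffun T =>
     (\sum_(a < k) z a * XD (vidx a i) (vidx a i) f T)
   + \sum_(j < n | j != i) (al j - al i)^-1 *
       \sum_(a < k) \sum_(b < k)
          XD (vidx a i) (vidx b i) (XD (vidx b j) (vidx a j) f) T].

Definition inZ (l : 'I_k -> nat) (m : 'I_n -> nat) : Prop :=
  (forall a, l a <= n)%N /\ (forall i, m i <= k)%N /\
  (\sum_(a < k) l a = \sum_(i < n) m i)%N.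

Definition wt_ok (l : 'I_k -> nat) (m : 'I_n -> nat) (S : {set 'I_(k * n)}) :=
  (forall a, #|[set i | vidx a i \in S]| = l a) /\
  (forall i, #|[set a | vidx a i \in S]| = m i).

Definition inPlm l m (f : Pkn) : Prop := forall S, f S != 0 -> wt_ok l m S.

Definition common_eig {I : Type} (ops : I -> Pkn -> Pkn) (lam : I -> C) l m
    (f : Pkn) : Prop :=
  inPlm l m f /\ forall x, ops x f = scalP (lam x) f.

Definition dim_le1 (P : Pkn -> Prop) : Prop :=
  exists u : Pkn, forall f, P f -> exists c : C, f = scalP c u.

Definition pt (al : 'I_n -> C) (z : 'I_k -> C) : 'I_(n + k) -> C :=
  fun t => match split t with inl i => al i | inr a => z a end.

End Fermionic.

(* Main.v *)
Require Import Defs.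
Set Warnings "-notation-overridden,-ambiguous-paths,-notation-incompatible-prefix".
From HB Require Import structures.
From mathcomp Require Import all_boot all_order all_algebra.
From mathcomp Require Import mpoly.
Import Order.TTheory GRing.Theory Num.Theory.
Local Open Scope ring_scope.
Section Abs.
Variables (C : numClosedFieldType) (N : nat).
Definition K2 {R : pzRingType} (M : 'M[R]_N) : 'M[R]_N :=
  \matrix_(i, j) \sum_l (M ^+ j) i l.
Lemma eig_pow (M : 'M[C]_N) (f : 'rV[C]_N) mu j :
  f *m M = mu *: f -> f *m M ^+ j = mu ^+ j *: f.
Proof.
move=> H; elim: j => [|j IH]; first by rewrite expr0 mulmx1 expr0 scale1r.
by rewrite exprSr -mulmxE mulmxA IH -scalemxAl H scalerA -exprSr.
Qed.
Lemma eig_K2 (M : 'M[C]_N) (f : 'rV[C]_N) mu :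
  f *m M = mu *: f -> f *m K2 M = (\sum_l f 0 l) *: \row_(j < N) mu ^+ j.
Proof.
move=> H; apply/rowP=> j; rewrite !mxE.
have := congr1 (fun g : 'rV_N => \sum_l g 0 l) (@eig_pow M f mu j H) => /=.
under eq_bigr do rewrite !mxE.
under [X in _ = X -> _]eq_bigr do rewrite !mxE.
move=> HH; rewrite mulrC mulr_sumr -HH exchange_big /=.
by apply: eq_bigr => i _; rewrite mxE mulr_sumr.
Qed.
Lemma K2_crit (M : 'M[C]_N) mu :
  \det (K2 M) != 0 ->
  exists u : 'rV[C]_N, forall f, f *m M = mu *: f -> exists c, f = c *: u.
Proof.
move=> hd; have hu : K2 M \in unitmx by rewrite unitmxE unitfE.
exists ((\row_(j < N) mu ^+ j) *m invmx (K2 M)) => f Hf.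
exists (\sum_l f 0 l).
by rewrite scalemxAl -(@eig_K2 M f mu Hf) mulmxK.
Qed.
End Abs.
Arguments K2 {N R}.
Section X.
Variables (C : numClosedFieldType) (N : nat).
Lemma scale_pow (M : 'M[C]_N) c j : (c *: M) ^+ j = c ^+ j *: M ^+ j.
Proof.
elim: j => [|j IH]; first by rewrite !expr0 scale1r.
by rewrite !exprS IH -!mulmxE -scalemxAl -scalerA -scalemxAr.
Qed.
End X.
Section Abs2.
Variables (C : numClosedFieldType) (N : nat).
Lemma K2_scale (M : 'M[C]_N) c : c != 0 -> \det (K2 M) != 0 -> \det (K2 (c *: M)) != 0.
Proof.
move=> hc hd.
have -> : K2 (c *: M) = K2 M *m diag_mx (\row_(j < N) c ^+ j).
  apply/matrixP => i j; rewrite mul_mx_diag !mxE scale_pow mulr_suml.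
  by apply: eq_bigr => l _; rewrite !mxE mulrC.
rewrite det_mulmx det_diag mulf_neq0 //; apply/prodf_neq0 => j _.
by rewrite mxE expf_neq0.
Qed.

Lemma map_mxX (R S : pzRingType) (f : {rmorphism R -> S}) (M : 'M[R]_N) j :
  map_mx f (M ^+ j) = (map_mx f M) ^+ j.
Proof.
elim: j => [|j IH]; first by rewrite !expr0 map_mx1.
by rewrite !exprS -!mulmxE map_mxM IH.
Qed.

Lemma map_K2 (R S : pzRingType) (f : {rmorphism R -> S}) (M : 'M[R]_N) :
  map_mx f (K2 M) = K2 (map_mx f M).
Proof.
apply/matrixP => i j; rewrite !mxE rmorph_sum; apply: eq_bigr => l _.
by rewrite -map_mxX mxE.
Qed.

Lemma K2_diag (d : 'rV[C]_N) : injective (d 0) -> \det (K2 (diag_mx d)) != 0.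
Proof.
move=> hinj.
have -> : K2 (diag_mx d) = (Vandermonde N d)^T.
  apply/matrixP => i j; rewrite !mxE.
  have Hp : forall j', diag_mx d ^+ j' = diag_mx (\row_i0 d 0 i0 ^+ j').
    elim=> [|j' IH]; first by apply/matrixP => x y; rewrite expr0 !mxE expr0.
    rewrite exprS IH -mulmxE mul_diag_mx; apply/matrixP => x y; rewrite !mxE.
    by case: (x =P y) => [->|_]; rewrite ?mulr1n ?mulr0n ?mulr0 // exprS.
  rewrite Hp (bigD1 i) //= big1 ?addr0; first by rewrite !mxE eqxx mulr1n.
  by move=> l /negPf hl; rewrite !mxE eq_sym hl mulr0n.
rewrite det_tr det_Vandermonde; apply/prodf_neq0 => i _; apply/prodf_neq0 => j hij.
rewrite subr_eq0; apply/negP => /eqP /hinj hji.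
by move: hij; rewrite hji ltnn.
Qed.
End Abs2.
Lemma poly_nonroot (C : numClosedFieldType) (p : {poly C}) :
  p != 0 -> exists s : C, s != 0 /\ p.[s] != 0.
Proof.
move=> hp; set p' := 'X * p.
have hp' : p' != 0 by rewrite mulf_neq0 ?polyX_eq0.
set rs := [seq (i%:R : C) | i <- iota 0 (size p')].
case hh: (has (fun x => p'.[x] != 0) rs).
  case/hasP: hh => x _ hx; exists x.
  by move: hx; rewrite /p' hornerM hornerX mulf_eq0 negb_or => /andP.
exfalso; have hall : all (root p') rs.
  apply/allP => x hx; apply/negPn; rewrite /root; apply/negP => hx'.
  by move/negbT/hasPn: hh => /(_ x hx); rewrite hx'.
have hu : uniq rs.
  rewrite map_inj_uniq ?iota_uniq // => i j /eqP; rewrite eqr_nat => /eqP.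
  done.
by move: (max_poly_roots hp' hall hu); rewrite size_map size_iota ltnn.
Qed.
Section PolyPart.
Variables (C : numClosedFieldType) (N nv q p : nat).
Variables (vx : 'I_q -> 'I_nv) (vy : 'I_p -> 'I_nv).
Variables (A : 'I_q -> 'M[C]_N) (B : 'I_p * 'I_p -> 'M[C]_N).

Definition Xm (x : 'I_q -> C) (y : 'I_p -> C) : 'M[C]_N :=
  \sum_i x i *: A i + \sum_(ab | ab.1 != ab.2) (y ab.1 - y ab.2)^-1 *: B ab.
Definition Dy (y : 'I_p -> C) : C := \prod_(ab : 'I_p * 'I_p | ab.1 != ab.2) (y ab.1 - y ab.2).
Definition Dexp (ab : 'I_p * 'I_p) : {mpoly C[nv]} :=
  \prod_(cd : 'I_p * 'I_p | (cd.1 != cd.2) && (cd != ab)) ('X_(vy cd.1) - 'X_(vy cd.2)).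
Definition Dp : {mpoly C[nv]} :=
  \prod_(cd : 'I_p * 'I_p | cd.1 != cd.2) ('X_(vy cd.1) - 'X_(vy cd.2)).
Definition cmx (M : 'M[C]_N) : 'M[{mpoly C[nv]}]_N := map_mx (fun c => c%:MP) M.
Definition Yp : 'M[{mpoly C[nv]}]_N :=
  \sum_i ('X_(vx i) * Dp) *: cmx (A i) + \sum_(ab | ab.1 != ab.2) Dexp ab *: cmx (B ab).
Definition Pp : {mpoly C[nv]} := \det (K2 Yp).

Lemma Xm_ext x x' y y' : x =1 x' -> y =1 y' -> Xm x y = Xm x' y'.
Proof.
move=> hx hy; rewrite /Xm; congr (_ + _); apply: eq_bigr => i _; first by rewrite hx.
by rewrite !hy.
Qed.

Lemma eval_cmx v M : map_mx (meval v) (cmx M) = M.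
Proof. by apply/matrixP => i j; rewrite !mxE mevalC. Qed.

Lemma evalY (v : 'I_nv -> C) : injective (v \o vy) ->
  map_mx (meval v) Yp = Dy (v \o vy) *: Xm (v \o vx) (v \o vy).
Proof.
move=> hinj.
have hD : meval v Dp = Dy (v \o vy).
  rewrite /Dp rmorph_prod; apply: eq_bigr => cd _.
  by rewrite rmorphB /= !mevalXU.
rewrite /Yp /Xm map_mxD !raddf_sum scalerDr !scaler_sumr; congr (_ + _).
  apply: eq_bigr => i _ /=; rewrite map_mxZ eval_cmx rmorphM /= mevalXU hD.
  by rewrite scalerA mulrC.
apply: eq_bigr => ab hab /=; rewrite map_mxZ eval_cmx scalerA; congr (_ *: _).
rewrite /Dy (bigD1 ab) //= mulrC mulrA mulrC.
have hne : v (vy ab.1) - v (vy ab.2) != 0.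
  by rewrite subr_eq0; apply/eqP => /hinj /eqP; rewrite (negbTE hab).
rewrite mulVf // mulr1 /Dexp rmorph_prod; apply: eq_bigr => cd _.
by rewrite rmorphB /= !mevalXU.
Qed.

Lemma Pp_crit (v : 'I_nv -> C) : injective (v \o vy) -> Pp.@[v] != 0 ->
  forall mu, exists u : 'rV[C]_N, forall f,
    f *m Xm (v \o vx) (v \o vy) = mu *: f -> exists c, f = c *: u.
Proof.
move=> hinj hP mu.
have := hP; rewrite /Pp -det_map_mx map_K2 evalY // => hd.
have [u hu] := @K2_crit _ _ _ (Dy (v \o vy) * mu) hd.
exists u => f hf; apply: hu.
by rewrite -scalemxAr hf scalerA mulrC.
Qed.

Lemma Pp_neq0 (x0 : 'I_q -> C) (w : 'I_p -> C) : injective w ->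
  \det (K2 (\sum_i x0 i *: A i)) != 0 ->
  (forall s : C, s != 0 -> exists v : 'I_nv -> C,
      (forall i, v (vx i) = x0 i) /\ (forall a, v (vy a) = s^-1 * w a)) ->
  Pp != 0.
Proof.
move=> winj hA0 hv.
set A0 := \sum_i x0 i *: A i.
set B' := \sum_(ab | ab.1 != ab.2) (w ab.1 - w ab.2)^-1 *: B ab.
set Mq : 'M[{poly C}]_N := map_mx polyC A0 + 'X *: map_mx polyC B'.
have hQ : forall s, (\det (K2 Mq)).[s] = \det (K2 (A0 + s *: B')).
  move=> s; rewrite -horner_evalE -det_map_mx map_K2; congr (\det (K2 _)).
  rewrite map_mxD map_mxZ /= horner_evalE hornerX; congr (_ + _ *: _).
    by apply/matrixP => i j; rewrite !mxE horner_evalE hornerC.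
  by apply/matrixP => i j; rewrite !mxE horner_evalE hornerC.
have hQ0 : \det (K2 Mq) != 0.
  have e0 : \det (K2 A0) = (\det (K2 Mq)).[0] by rewrite hQ scale0r addr0.
  by apply/negP => /eqP h; move: hA0; rewrite -/A0 e0 h horner0 eqxx.
have [s [hs0 hs]] := @poly_nonroot _ _ hQ0.
have [v [hvx hvy]] := hv s hs0.
have hinj : injective (v \o vy).
  move=> a b /=; rewrite !hvy => /(mulfI (invr_neq0 hs0)); exact: winj.
apply/negP => /eqP hP.
have := @Pp_crit v hinj.
have : Pp.@[v] != 0.
  rewrite /Pp -det_map_mx map_K2 evalY //.
  apply: K2_scale.
    apply/prodf_neq0 => ab hab; rewrite subr_eq0; apply/eqP => /hinj /eqP.
    by rewrite (negbTE hab).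
  have -> : Xm (v \o vx) (v \o vy) = A0 + s *: B'.
    rewrite /Xm /A0 /B'; congr (_ + _).
      by apply: eq_bigr => i _ /=; rewrite hvx.
    rewrite scaler_sumr; apply: eq_bigr => ab hab /=; rewrite !hvy scalerA.
    congr (_ *: _); rewrite -mulrBr invfM invrK mulrC //.
  by rewrite -hQ.
by rewrite hP meval0 eqxx.
Qed.
End PolyPart.
Arguments Xm {C N q p} A B x y.
Arguments Pp {C N nv q p} vx vy A B.

From mathcomp Require Import zify.
Lemma digits_bound (Bs M : nat) (r : 'I_M -> nat) :
  (forall a, r a < Bs)%N -> (\sum_(a < M) Bs ^ a * r a < Bs ^ M)%N.
Proof.
elim: M r => [|M IH] r hr; first by rewrite big_ord0 expn0.
rewrite big_ord_recr /= expnS.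
have := IH (fun a => r (widen_ord (leqnSn M) a)) (fun a => hr _).
have := hr ord_max.
set X := (\sum_(i < M) _)%N; set P := (Bs ^ M)%N; set rm := r ord_max.
move=> h1 h2; nia.
Qed.

Lemma digits_inj (Bs M : nat) (r r' : 'I_M -> nat) :
  (forall a, r a < Bs)%N -> (forall a, r' a < Bs)%N ->
  (\sum_(a < M) Bs ^ a * r a = \sum_(a < M) Bs ^ a * r' a)%N -> forall a, r a = r' a.
Proof.
elim: M r r' => [|M IH] r r' hr hr' he a; first by case: a.
move: he; rewrite !big_ord_recr /=.
have b1 := @digits_bound Bs M _ (fun a => hr (widen_ord (leqnSn M) a)).
have b2 := @digits_bound Bs M _ (fun a => hr' (widen_ord (leqnSn M) a)).
move: b1 b2.
set X := (\sum_(i < M) _)%N; set X' := (\sum_(i < M) _)%N; set P := (Bs ^ M)%N.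
move=> b1 b2 he.
have em : r ord_max = r' ord_max.
  case: (ltngtP (r ord_max) (r' ord_max)) => // h; nia.
have eX : X = X' by move: he; rewrite em; lia.
have IH' := IH _ _ (fun a => hr (widen_ord (leqnSn M) a)) (fun a => hr' (widen_ord (leqnSn M) a)) eX.
have [ha|ha] := ltnP a M.
  have -> : a = widen_ord (leqnSn M) (Ordinal ha) by apply/val_inj.
  exact: IH'.
have -> : a = ord_max by apply/val_inj => /=; move: (ltn_ord a); lia.
exact: em.
Qed.
Lemma sum_enum (C : nmodType) (T : finType) (F : T -> C) : \sum_(S : T) F S = \sum_(i < #|{: T}|) F (enum_val i).
Proof. rewrite -big_enum_val /=. apply: eq_bigl => x. by rewrite inE. Qed.

Section Concrete.
Variables (C : numClosedFieldType) (k n : nat).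
Local Notation T := {set 'I_(k * n)}.
Local Notation NN := #|{: T}|.
Local Notation v := (@vidx k n).

Definition toR (f : Pkn C k n) : 'rV[C]_NN := \row_j f (enum_val j).
Definition fromR (u : 'rV[C]_NN) : Pkn C k n := [ffun S => u 0 (enum_rank S)].
Definition MXD (c d : 'I_(k * n)) : 'M[C]_NN :=
  \matrix_(i, j) xd_mono C c d (enum_val i) (enum_val j).

Lemma XD_mx c d f : toR (XD c d f) = toR f *m MXD c d.
Proof.
apply/rowP => j; rewrite !mxE ffunE sum_enum.
by apply: eq_bigr => i _; rewrite !mxE.
Qed.

Lemma toR_scal c f : toR (scalP c f) = c *: toR f.
Proof. by apply/rowP => j; rewrite !mxE ffunE. Qed.

Lemma toR_inj f g : toR f = toR g -> f = g.
Proof.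
move=> h; apply/ffunP => S; have := congr1 (fun r : 'rV_NN => r 0 (enum_rank S)) h.
by rewrite !mxE enum_rankK.
Qed.

Lemma toR_fromR_scal c u f : toR f = c *: u -> f = scalP c (fromR u).
Proof.
move=> h; apply: toR_inj; rewrite h toR_scal; congr (_ *: _).
by apply/rowP => j; rewrite !mxE ffunE enum_valK.
Qed.

Definition Hmx (al : 'I_n -> C) (z : 'I_k -> C) (a : 'I_k) : 'M[C]_NN :=
  \sum_(i < n) al i *: MXD (v a i) (v a i)
  + \sum_(b < k | b != a) (z a - z b)^-1 *:
      \sum_(i < n) \sum_(j < n) (MXD (v b j) (v b i) *m MXD (v a i) (v a j)).

Lemma Hop_mx al z a f : toR (Hop al z a f) = toR f *m Hmx al z a.
Proof.
rewrite /Hmx mulmxDr !mulmx_sumr.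
apply/rowP => t; rewrite !mxE ffunE !summxE; congr (_ + _).
  apply: eq_bigr => i _; rewrite -scalemxAr -XD_mx !mxE; done.
apply: eq_bigr => b _; rewrite -scalemxAr mulmx_sumr !mxE summxE; congr (_ * _).
apply: eq_bigr => i _; rewrite mulmx_sumr summxE; apply: eq_bigr => j _.
by rewrite mulmxA -XD_mx -XD_mx mxE.
Qed.

Definition H'mx (al : 'I_n -> C) (z : 'I_k -> C) (i : 'I_n) : 'M[C]_NN :=
  \sum_(a < k) z a *: MXD (v a i) (v a i)
  + \sum_(j < n | j != i) (al j - al i)^-1 *:
      \sum_(a < k) \sum_(b < k) (MXD (v b j) (v a j) *m MXD (v a i) (v b i)).

Lemma Hop'_mx al z i f : toR (Hop' al z i f) = toR f *m H'mx al z i.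
Proof.
rewrite /H'mx mulmxDr !mulmx_sumr.
apply/rowP => t; rewrite !mxE ffunE !summxE; congr (_ + _).
  apply: eq_bigr => a _; rewrite -scalemxAr -XD_mx !mxE; done.
apply: eq_bigr => j _; rewrite -scalemxAr mulmx_sumr !mxE summxE; congr (_ * _).
apply: eq_bigr => a _; rewrite mulmx_sumr summxE; apply: eq_bigr => b _.
by rewrite mulmxA -XD_mx -XD_mx mxE.
Qed.

End Concrete.
Arguments MXD C {k n} c d.
Arguments toR {C k n} f.
Arguments fromR {C k n} u.
Arguments Hmx {C k n} al z a.
Arguments H'mx {C k n} al z i.
Section Concrete2.
Variables (C : numClosedFieldType) (k n : nat).
Local Notation T := {set 'I_(k * n)}.
Local Notation NN := #|{: T}|.
Local Notation v := (@vidx k n).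

Lemma xd_diag (c : 'I_(k * n)) (S S' : T) :
  xd_mono C c c S S' = ((c \in S) && (S' == S))%:R.
Proof.
rewrite /xd_mono; case: ifP => hc /=; last by rewrite ffunE.
rewrite setD11 ffunE ffunE setD1K //.
have -> : [set e in S :\ c | (e < c)%N] = [set e in S | (e < c)%N].
  apply/setP => e; rewrite !inE.
  by case: (eqVneq e c) => [->|] /=; rewrite ?ltnn ?andbF.
by rewrite exprD -exprMn mulrNN mulr1 expr1n mul1r.
Qed.

Lemma MXD_diag (c : 'I_(k * n)) : MXD C c c = diag_mx (\row_(j < NN) ((c \in (enum_val j : T)) : nat)%:R).
Proof.
apply/matrixP => i j; rewrite !mxE xd_diag (inj_eq enum_val_inj) eq_sym.
by case: (i =P j) => [->|]; case: (c \in _).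
Qed.

Lemma A0_diag :
  \det (K2 (\sum_(a < k) \sum_(i < n) ((2 ^ (n * a) * 2 ^ i)%N%:R : C) *: MXD C (v a i) (v a i))) != 0.
Proof.
set d : 'rV[C]_NN := \row_(j < NN) (\sum_(a < k) 2 ^ (n * a) * \sum_(i < n) 2 ^ i * (v a i \in (enum_val j : T)))%N%:R.
have -> : \sum_(a < k) \sum_(i < n) ((2 ^ (n * a) * 2 ^ i)%N%:R : C) *: MXD C (v a i) (v a i) = diag_mx d.
  apply/matrixP => x y; rewrite summxE !mxE natr_sum.
  case: (x =P y) => [<-|hxy].
    rewrite mulr1n; apply: eq_bigr => a _; rewrite summxE natrM natr_sum mulr_sumr.
    apply: eq_bigr => i _; rewrite MXD_diag !mxE eqxx mulr1n natrM -mulrA -natrM.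
    by case: (_ \in _); rewrite ?mulr1 ?muln1 ?mulr0 ?muln0.
  rewrite mulr0n; apply: big1 => a _; rewrite summxE; apply: big1 => i _.
  by rewrite MXD_diag !mxE; move/eqP/negbTE: hxy => ->; rewrite mulr0n mulr0.
apply: K2_diag => x y; rewrite !mxE => /eqP; rewrite eqr_nat => /eqP hxy.
apply: enum_val_inj; apply/setP => c; case/mxvec_indexP: c => a i.
pose R (j : 'I_NN) (a : 'I_k) := (\sum_(i0 < n) 2 ^ i0 * (v a i0 \in (enum_val j : T)))%N.
have hR : forall j a, (R j a < 2 ^ n)%N.
  move=> j a0; apply: digits_bound => i0; by case: (_ \in _).
have e : forall j, (\sum_(a < k) 2 ^ (n * a) * R j a = \sum_(a < k) (2 ^ n) ^ a * R j a)%N.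
  by move=> j; apply: eq_bigr => a0 _; rewrite expnM.
have hxy' := hxy; rewrite -/(R x) in hxy'.
have H1 := @digits_inj (2 ^ n) k (R x) (R y) (hR x) (hR y).
rewrite -!e in H1; have {H1} H1 := H1 hxy a.
have H2 := @digits_inj 2 n (fun i0 => (v a i0 \in (enum_val x : T)) : nat)
   (fun i0 => (v a i0 \in (enum_val y : T)) : nat).
have {H2} H2 := H2 (fun i0 => ltac:(by case: (_ \in _))) (fun i0 => ltac:(by case: (_ \in _))) H1 i.
by move: H2; case: (_ \in _); case: (_ \in _).
Qed.
End Concrete2.
Lemma pt_l (C : numClosedFieldType) k n (al : 'I_n -> C) (z : 'I_k -> C) i :
  pt al z (lshift k i) = al i.
Proof. by rewrite /pt (unsplitK (inl _ i) : split (lshift k i) = inl i). Qed.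
Lemma pt_r (C : numClosedFieldType) k n (al : 'I_n -> C) (z : 'I_k -> C) a :
  pt al z (rshift n a) = z a.
Proof. by rewrite /pt (unsplitK (inr _ a) : split (rshift n a) = inr a). Qed.

Section Part1.
Variables (C : numClosedFieldType) (k n : nat).
Local Notation T := {set 'I_(k * n)}.
Local Notation NN := #|{: T}|.
Local Notation v := (@vidx k n).
Definition be1 (a : 'I_k) : C := (2 ^ (n * a))%N%:R.
Definition A1 (i : 'I_n) : 'M[C]_NN := \sum_(a < k) be1 a *: MXD C (v a i) (v a i).
Definition B1 (ab : 'I_k * 'I_k) : 'M[C]_NN := be1 ab.1 *:
  \sum_(i < n) \sum_(j < n) (MXD C (v ab.2 j) (v ab.2 i) *m MXD C (v ab.1 i) (v ab.1 j)).

Lemma L1 al z : \sum_(a < k) be1 a *: Hmx al z a = Xm A1 B1 al z.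
Proof.
rewrite /Hmx /Xm; under eq_bigr do rewrite scalerDr.
rewrite big_split /=; congr (_ + _).
  rewrite /A1; under eq_bigr do rewrite scaler_sumr.
  under [RHS]eq_bigr do rewrite scaler_sumr.
  rewrite exchange_big /=; apply: eq_bigr => i _; apply: eq_bigr => a _.
  by rewrite !scalerA mulrC.
under eq_bigr do rewrite scaler_sumr.
rewrite pair_big_dep /=; apply: eq_big => [ab|ab _]; first by rewrite eq_sym.
by rewrite /B1 !scalerA mulrC.
Qed.
End Part1.
Arguments be1 {C k n} a.
Arguments A1 {C k n} i.
Arguments B1 {C k n} ab.
Section Part2.
Variables (C : numClosedFieldType) (k n : nat).
Local Notation T := {set 'I_(k * n)}.
Local Notation NN := #|{: T}|.
Local Notation v := (@vidx k n).
Definition be2 (i : 'I_n) : C := (2 ^ i)%N%:R.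
Definition A2 (a : 'I_k) : 'M[C]_NN := \sum_(i < n) be2 i *: MXD C (v a i) (v a i).
Definition B2 (ji : 'I_n * 'I_n) : 'M[C]_NN := be2 ji.2 *:
  \sum_(a < k) \sum_(b < k) (MXD C (v b ji.1) (v a ji.1) *m MXD C (v a ji.2) (v b ji.2)).

Lemma L2 al z : \sum_(i < n) be2 i *: H'mx al z i = Xm A2 B2 z al.
Proof.
rewrite /H'mx /Xm; under eq_bigr do rewrite scalerDr.
rewrite big_split /=; congr (_ + _).
  rewrite /A2; under eq_bigr do rewrite scaler_sumr.
  under [RHS]eq_bigr do rewrite scaler_sumr.
  rewrite exchange_big /=; apply: eq_bigr => i _; apply: eq_bigr => a _.
  by rewrite !scalerA mulrC.
under eq_bigr do rewrite scaler_sumr.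
rewrite pair_big_dep /=.
rewrite (reindex (fun p : 'I_n * 'I_n => (p.2, p.1))) /=; last first.
  by exists (fun p : 'I_n * 'I_n => (p.2, p.1)) => [[x y]|[x y]].
apply: eq_big => [ab|ab _]; first by [].
by rewrite /B2 !scalerA mulrC.
Qed.
End Part2.
Arguments be2 {C n} i.
Arguments A2 {C k n} a.
Arguments B2 {C k n} ji.
Lemma part1 (C : numClosedFieldType) (k n : nat) (l : 'I_k -> nat) (m : 'I_n -> nat) :
  exists P : {mpoly C[n + k]}, P != 0 /\
     forall (al : 'I_n -> C) (z : 'I_k -> C),
       injective al -> injective z -> P.@[pt al z] != 0 ->
       forall lam : 'I_k -> C,
         dim_le1 (common_eig (Hop al z) lam l m).
Proof.
exists (Pp (lshift k) (@rshift n k) (A1 (C:=C)) (B1 (C:=C))); split.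
  apply: (@Pp_neq0 _ _ _ _ _ (lshift k) (@rshift n k) _ _
           (fun i => (2 ^ i)%N%:R) (fun a : 'I_k => (a : nat)%:R)).
  - by move=> a b /eqP; rewrite eqr_nat => /eqP; apply: val_inj.
  - set M := (X in K2 X).
    have -> : M = \sum_(a < k) \sum_(i < n) ((2 ^ (n * a) * 2 ^ i)%N%:R : C) *: MXD C (@vidx k n a i) (vidx a i).
      rewrite /M /A1; under eq_bigr do rewrite scaler_sumr.
      rewrite exchange_big /=; apply: eq_bigr => a _; apply: eq_bigr => i _.
      by rewrite scalerA natrM /be1 mulrC.
    exact: A0_diag.
  - move=> s hs; exists (pt (fun i : 'I_n => ((2 ^ i)%N%:R : C)) (fun a : 'I_k => s^-1 * (a : nat)%:R)).
    by split => ?; rewrite ?pt_l ?pt_r.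
move=> al z hal hz hP lam.
have hinj : injective (pt al z \o @rshift n k) by move=> a b /=; rewrite !pt_r; apply: hz.
have H := @Pp_crit _ _ _ _ _ (lshift k) (@rshift n k) (@A1 C k n) (@B1 C k n) (pt al z).
case: (H hinj hP (\sum_(a < k) @be1 C k n a * lam a)) => u hu.
exists (fromR u) => f [_ heig].
have : toR f *m Xm A1 B1 (pt al z \o lshift k) (pt al z \o @rshift n k) = (\sum_(a < k) @be1 C k n a * lam a) *: toR f.
  rewrite (@Xm_ext _ _ _ _ A1 B1 _ al _ z); last 2 first.
  - by move=> i /=; rewrite pt_l.
  - by move=> a /=; rewrite pt_r.
  rewrite -L1 mulmx_sumr scaler_suml; apply: eq_bigr => a _.
  by rewrite -scalemxAr -Hop_mx heig toR_scal scalerA.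
move/hu => [c hc]; exists c; exact: toR_fromR_scal.
Qed.

Lemma part2 (C : numClosedFieldType) (k n : nat) (l : 'I_k -> nat) (m : 'I_n -> nat) :
  exists P : {mpoly C[n + k]}, P != 0 /\
     forall (al : 'I_n -> C) (z : 'I_k -> C),
       injective al -> injective z -> P.@[pt al z] != 0 ->
       forall lam : 'I_n -> C,
         dim_le1 (common_eig (Hop' al z) lam l m).
Proof.
exists (Pp (@rshift n k) (lshift k) (A2 (C:=C)) (B2 (C:=C))); split.
  apply: (@Pp_neq0 _ _ _ _ _ (@rshift n k) (lshift k) _ _
           (fun a : 'I_k => (2 ^ (n * a))%N%:R) (fun i : 'I_n => (i : nat)%:R)).
  - by move=> a b /eqP; rewrite eqr_nat => /eqP; apply: val_inj.
  - set M := (X in K2 X).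
    have -> : M = \sum_(a < k) \sum_(i < n) ((2 ^ (n * a) * 2 ^ i)%N%:R : C) *: MXD C (@vidx k n a i) (vidx a i).
      rewrite /M /A2; under eq_bigr do rewrite scaler_sumr.
      apply: eq_bigr => a _; apply: eq_bigr => i _.
      by rewrite scalerA natrM /be2.
    exact: A0_diag.
  - move=> s hs; exists (pt (fun i : 'I_n => s^-1 * (i : nat)%:R) (fun a : 'I_k => ((2 ^ (n * a))%N%:R : C))).
    by split => ?; rewrite ?pt_l ?pt_r.
move=> al z hal hz hP lam.
have hinj : injective (pt al z \o lshift k) by move=> a b /=; rewrite !pt_l; apply: hal.
have H := @Pp_crit _ _ _ _ _ (@rshift n k) (lshift k) (@A2 C k n) (@B2 C k n) (pt al z).
case: (H hinj hP (\sum_(i < n) @be2 C n i * lam i)) => u hu.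
exists (fromR u) => f [_ heig].
have : toR f *m Xm A2 B2 (pt al z \o @rshift n k) (pt al z \o lshift k) = (\sum_(i < n) @be2 C n i * lam i) *: toR f.
  rewrite (@Xm_ext _ _ _ _ A2 B2 _ z _ al); last 2 first.
  - by move=> i /=; rewrite pt_r.
  - by move=> a /=; rewrite pt_l.
  rewrite -L2 mulmx_sumr scaler_suml; apply: eq_bigr => i _.
  by rewrite -scalemxAr -Hop'_mx heig toR_scal scalerA.
move/hu => [c hc]; exists c; exact: toR_fromR_scal.
Qed.

Theorem lemma5p6 (C : numClosedFieldType) (k n : nat)
    (l : 'I_k -> nat) (m : 'I_n -> nat) :
  inZ l m ->
  (exists P : {mpoly C[n + k]}, P != 0 /\
     forall (al : 'I_n -> C) (z : 'I_k -> C),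
       injective al -> injective z -> P.@[pt al z] != 0 ->
       forall lam : 'I_k -> C,
         dim_le1 (common_eig (Hop al z) lam l m))
  /\
  (exists P : {mpoly C[n + k]}, P != 0 /\
     forall (al : 'I_n -> C) (z : 'I_k -> C),
       injective al -> injective z -> P.@[pt al z] != 0 ->
       forall lam : 'I_n -> C,
         dim_le1 (common_eig (Hop' al z) lam l m)).
Proof. move=> _; split; [exact: part1 | exact: part2]. Qed.
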